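(* Let $P\subseteq\mathbb{R}^m$ and $Q\subseteq\mathbb{R}^n$, let $\ell\le m$ and $\ell'\le n$ be positive integers with $m-\ell=n-\ell'$, and let $I=\{1,\dots,\ell\}$ and $I'=\{1,\dots,\ell'\}$. Let $g:\mathbb{R}^\ell\to\mathbb{R}^{\ell'}$ be an integral affine transformation, and define $f:\mathbb{R}^m\to\mathbb{R}^n$ by $f(x)=(g(x^1),x^2)$ where $x=(x^1,x^2)$ with $x^1\in\mathbb{R}^\ell$, $x^2\in\mathbb{R}^{m-\ell}$. If $f(P)\subseteq Q$, then for every integer $k\ge 1$, \[f\big(\mathrm{SC}^k(P,I)\big)\subseteq \mathrm{SC}^k(Q,I').\]
   Context: An integral affine transformation $g:\mathbb{R}^\ell\to\mathbb{R}^{\ell'}$ is a map $g(x)=Vx+v$ with $V$ an integral $\ell'\times\ell$ matrix and $v\in\mathbb{Z}^{\ell'}$. For $(\pi,\pi_0)\in\mathbb{Z}^n\times\mathbb{Z}$, the split set is $S(\pi,\pi_0)=\{x\in\mathbb{R}^n:\pi_0<\pi^Tx<\pi_0+1\}$. For $J\subseteq\{1,\dots,n\}$, $\mathcal{S}_n(J)$ is the family of split sets $S(\pi,\pi_0)$ with $\pi\in\mathbb{Z}^n$, $\pi_j=0$ for $j\notin J$, $\pi_0\in\mathbb{Z}$. For $X\subseteq\mathbb{R}^n$, $\mathrm{SC}(X,J)=\bigcap_{S\in\mathcal{S}_n(J)}\mathrm{conv}(X\setminus S)$, $\mathrm{SC}^1(X,J)=\mathrm{SC}(X,J)$ and $\mathrm{SC}^k(X,J)=\mathrm{SC}(\mathrm{SC}^{k-1}(X,J),J)$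 for $k\ge2$. *)

(* Defs.v *)
From HB Require Import structures.
From mathcomp Require Import all_boot all_order all_algebra.
From mathcomp Require Import boolp classical_sets reals.
Set Implicit Arguments. Unset Strict Implicit. Unset Printing Implicit Defensive.
Import Order.TTheory GRing.Theory Num.Theory.
Local Open Scope ring_scope.
Local Open Scope classical_set_scope.

(* Points of R^n are row vectors 'rV[R]_n; coordinates are indexed by 'I_n
   (coordinate j+1 of the paper is index j here). *)

Definition conv (R : realType) (n : nat) (X : set 'rV[R]_n) : set 'rV[R]_n :=
  [set y | exists (k : nat) (x : 'I_k -> 'rV[R]_n) (lam : 'I_k -> R),
      (forall i, X (x i)) /\ (forall i, 0 <= lam i) /\
      \sum_(i < k) lam i = 1 /\ y = \sum_(i < k) lam i *: x i].

Definition split_set (R : realType) (n : nat) (pi : 'rV[int]_n) (pi0 : int)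
  : set 'rV[R]_n :=
  [set x | pi0%:~R < \sum_(i < n) (pi ord0 i)%:~R * x ord0 i < pi0%:~R + 1].

Definition SC (R : realType) (n : nat) (X : set 'rV[R]_n) (J : {set 'I_n})
  : set 'rV[R]_n :=
  [set y | forall (pi : 'rV[int]_n) (pi0 : int),
      (forall j, j \notin J -> pi ord0 j = 0) ->
      conv (X `\` @split_set R n pi pi0) y].

Definition SCk (R : realType) (n : nat) (k : nat) (X : set 'rV[R]_n)
  (J : {set 'I_n}) : set 'rV[R]_n :=
  iter k (fun Y => SC Y J) X.

(* The integral affine map g(x) = V x + v (written for row vectors). *)
Definition int_affine (R : realType) (l l' : nat) (V : 'M[int]_(l', l))
  (v : 'rV[int]_l') (x : 'rV[R]_l) : 'rV[R]_l' :=
  x *m (map_mx (fun z : int => z%:~R) V)^T + map_mx (fun z : int => z%:~R) v.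

Definition lift_affine (R : realType) (l l' d : nat) (V : 'M[int]_(l', l))
  (v : 'rV[int]_l') (x : 'rV[R]_(l + d)) : 'rV[R]_(l' + d) :=
  row_mx (int_affine V v (lsubmx x)) (rsubmx x).

Definition first_coords (l d : nat) : {set 'I_(l + d)} :=
  [set i : 'I_(l + d) | (i < l)%N].

(* Main.v *)
Require Import Defs.
From HB Require Import structures.
From mathcomp Require Import all_boot all_order all_algebra.
From mathcomp Require Import boolp classical_sets reals.
From mathcomp Require Import zify lra.
Local Open Scope ring_scope.
Local Open Scope classical_set_scope.
Import GRing.Theory Num.Theory.

Section Aux.
Variables (R : realType) (l l' d : nat) (V : 'M[int]_(l', l)) (v : 'rV[int]_l').

Local Notation mi A := (map_mx (fun z : int => (z%:~R : R)) A).
Local Notation f := (@lift_affine R l l' d V v).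

Lemma dotE n (p : 'rV[int]_n) (z : 'rV[R]_n) :
  \sum_(i < n) (p ord0 i)%:~R * z ord0 i = (mi p *m z^T) ord0 ord0.
Proof. rewrite !mxE; apply: eq_bigr => i _; by rewrite !mxE. Qed.

Lemma f_sum k (xs : 'I_k -> 'rV[R]_(l + d)) (lam : 'I_k -> R) :
  \sum_(i < k) lam i = 1 ->
  f (\sum_(i < k) lam i *: xs i) = \sum_(i < k) lam i *: f (xs i).
Proof.
move=> h1; rewrite /lift_affine /int_affine.
rewrite -[RHS]hsubmxK; congr row_mx.
  rewrite [in RHS]linear_sum /=.
  under [RHS]eq_bigr do rewrite linearZ /= row_mxKl.
  rewrite linear_sum mulmx_suml.
  under [RHS]eq_bigr do rewrite scalerDr.
  rewrite big_split /=; congr (_ + _).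
    by apply: eq_bigr => i _; rewrite linearZ /= scalemxAl.
  by rewrite -scaler_suml h1 scale1r.
rewrite [in RHS]linear_sum /=.
under [RHS]eq_bigr do rewrite linearZ /= row_mxKr.
by rewrite linear_sum /=; apply: eq_bigr => i _; rewrite linearZ.
Qed.

Lemma split_lift (pi' : 'rV[int]_(l' + d)) (pi0' : int) (z : 'rV[R]_(l + d)) :
  rsubmx pi' = 0 ->
  split_set pi' pi0' (f z) =
  split_set (row_mx (lsubmx pi' *m V) (0 : 'rV[int]_d))
     (pi0' - (lsubmx pi' *m v^T) ord0 ord0) z.
Proof.
move=> hr; rewrite /split_set /= !dotE.
have -> : mi pi' = row_mx (mi (lsubmx pi')) 0.
  by rewrite -{1}[pi']hsubmxK hr map_row_mx map_mx0.
rewrite map_row_mx map_mx0 /lift_affine /int_affine.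
rewrite tr_row_mx mul_row_col mul0mx addr0.
rewrite -[in RHS](hsubmxK z) tr_row_mx mul_row_col mul0mx addr0.
rewrite linearD /= trmx_mul trmxK mulmxDr mulmxA map_mxM.
have -> : (mi (lsubmx pi') *m (mi v)^T) = mi (lsubmx pi' *m v^T).
  by rewrite map_mxM map_trmx.
rewrite [in LHS]mxE [X in _ + X]mxE intrB.
set a := (_ *m _) ord0 ord0; set c := (_ %:~R).
apply/propext; split => /andP [h1 h2]; apply/andP; split; lra.
Qed.

Lemma step (X : set 'rV[R]_(l + d)) (Y : set 'rV[R]_(l' + d)) :
  (forall x, X x -> Y (f x)) ->
  forall x, SC X (first_coords l d) x -> SC Y (first_coords l' d) (f x).
Proof.
move=> hXY x hx pi' pi0' hsupp.
have hr : rsubmx pi' = 0.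
  apply/matrixP=> i j; rewrite !mxE ord1; apply: hsupp.
  by rewrite inE /= -leqNgt leq_addr.
set pi := row_mx (lsubmx pi' *m V) (0 : 'rV[int]_d).
have hsp : forall j, j \notin first_coords l d -> pi ord0 j = 0.
  move=> j; rewrite inE /= -leqNgt => hj.
  have hj' : (j - l < d)%N by have := ltn_ord j; lia.
  have -> : j = rshift l (Ordinal hj') by apply/val_inj => /=; lia.
  by rewrite row_mxEr mxE.
case: (hx pi (pi0' - (lsubmx pi' *m v^T) ord0 ord0) hsp)
  => k [xs [lam [hX [h0 [h1 ->]]]]].
exists k, (fun i => f (xs i)), lam; split; [|split; [|split]] => //.
  move=> i; case: (hX i) => hXi hS; split; first exact: hXY.
  by rewrite split_lift.
exact: f_sum.
Qed.

End Aux.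

Theorem theorem2 (R : realType) (l l' d : nat) (hl : (0 < l)%N) (hl' : (0 < l')%N)
  (P : set 'rV[R]_(l + d)) (Q : set 'rV[R]_(l' + d))
  (V : 'M[int]_(l', l)) (v : 'rV[int]_l')
  (hPQ : forall x, P x -> Q (@lift_affine R l l' d V v x))
  (k : nat) (hk : (1 <= k)%N) :
  forall x, SCk k P (first_coords l d) x ->
    SCk k Q (first_coords l' d) (@lift_affine R l l' d V v x).
Proof.
rewrite /SCk; clear hk; elim: k => [|k IH] /=; first exact: hPQ.
exact: step.
Qed.
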